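(* Let $\mathcal{K}$ be a consistent statistical $\mathcal{ALC}$ knowledge base and $C, D$ $\mathcal{ALC}$ concepts. Then: (1) for all rationals $0 \le \ell \le u \le 1$: $\mathcal{K} \models_l (C \mid D)[\ell,u]$ iff $\{\kappa \in \mathcal{K} \mid \kappa \rightleftharpoons^* (C \mid D)[\ell,u]\} \models_l (C \mid D)[\ell,u]$; (2) for all $m, M$: $\mathcal{K} \models_p (C \mid D)[m,M]$ iff $\{\kappa \in \mathcal{K} \mid \kappa \rightleftharpoons^* (C \mid D)\} \models_p (C \mid D)[m,M]$.
   Context: $\mathcal{ALC}$ concepts over disjoint sets $N_C$, $N_R$: $C ::= \top \mid A \mid \neg C \mid C \sqcap C \mid \exists r.C$, standard semantics. Interpretations $\mathcal{I} = (\Delta^{\mathcal{I}}, \cdot^{\mathcal{I}})$ have non-empty finite domain; $[X]^{\mathcal{I}} := |X^{\mathcal{I}}|$. A conditional is $(C \mid D)[\ell,u]$ with concepts $C,D$ and rationals $0 \le \ell \le u \le 1$; $\mathcal{I} \models (C \mid D)[\ell,u]$ iff $[D]^{\mathcal{I}} = 0$ or $[C \sqcap D]^{\mathcal{I}}/[D]^{\mathcal{I}} \in [\ell,u]$. A statistical $\mathcal{ALC}$ knowledge base $\mathcal{K}$ is a finite set of conditionals; $\mathrm{Mod}(\mathcal{K})$ is its set of finite models; consistent means $\mathrm{Mod}(\mathcal{K}) \ne \emptyset$. $\mathcal{K} \models_l (C\mid D)[\ell,u]$ iff every model of $\mathcal{K}$ satisfies $(C\mid D)[\ell,u]$. A query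 is an expression $(C \mid D)$. $\mathcal{K} \models_p (C \mid D)[m,M]$ means: some $\mathcal{I} \in \mathrm{Mod}(\mathcal{K})$ has $[D]^{\mathcal{I}} > 0$, and $m$, $M$ are respectively the infimum and supremum of $[C \sqcap D]^{\mathcal{I}}/[D]^{\mathcal{I}}$ over all $\mathcal{I} \in \mathrm{Mod}(\mathcal{K})$ with $[D]^{\mathcal{I}} > 0$. For a concept $C$, $\mathrm{Sig}(C)$ is the set of concept and role names occurring in $C$; the signature of a conditional $(C\mid D)[\ell,u]$ or a query $(C \mid D)$ is $\mathrm{Sig}(C) \cup \mathrm{Sig}(D)$. Two conditionals/queries are directly connected ($\rightleftharpoons$) iff their signatures intersect; $\rightleftharpoons^*$ is the transitive closure of $\rightleftharpoons$ (taken over the conditionals of $\mathcal{K}$ together with the given conditional or query), so $\kappa \rightleftharpoons^* q$ means there is a chain from $\kappa$ to $q$ of consecutive directly connected elements. *)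

(* Defs.v *)
From Stdlib Require Import Reals QArith Qreals List.
From mathcomp Require Import all_boot.

Set Implicit Arguments.
Unset Strict Implicit.
Unset Printing Implicit Defensive.

Inductive concept (NC NR : Type) : Type :=
| CTop : concept NC NR
| CAtom : NC -> concept NC NR
| CNeg : concept NC NR -> concept NC NR
| CAnd : concept NC NR -> concept NC NR -> concept NC NR
| CEx : NR -> concept NC NR -> concept NC NR.

Arguments CTop {NC NR}.

Fixpoint Sig (NC NR : Type) (C : concept NC NR) : list (NC + NR) :=
  match C with
  | CTop => nil
  | CAtom A => inl A :: nil
  | CNeg C1 => Sig C1
  | CAnd C1 C2 => Sig C1 ++ Sig C2
  | CEx r C1 => inr r :: Sig C1
  end.

(* Interpretation over a finite domain T (non-emptiness imposed separately) *)
Record interp (NC NR : Type) (T : finType) := Interp {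
  cI : NC -> pred T;
  rI : NR -> rel T }.

Fixpoint ext (NC NR : Type) (T : finType) (I : interp NC NR T) (C : concept NC NR) : pred T :=
  match C with
  | CTop => fun _ => true
  | CAtom A => cI I A
  | CNeg C1 => fun x => ~~ ext I C1 x
  | CAnd C1 C2 => fun x => ext I C1 x && ext I C2 x
  | CEx r C1 => fun x => [exists y, rI I r x y && ext I C1 y]
  end.

Definition card_ext (NC NR : Type) (T : finType) (I : interp NC NR T) (C : concept NC NR) : nat :=
  #|[set x | ext I C x]|.

Definition ratio (NC NR : Type) (T : finType) (I : interp NC NR T) (C D : concept NC NR) : R :=
  Rdiv (INR (card_ext I (CAnd C D))) (INR (card_ext I D)).

Record cond (NC NR : Type) := Cond {
  ccon : concept NC NR;
  cpre : concept NC NR;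
  clo : Q;
  cup : Q }.

Definition wf_cond (NC NR : Type) (k : cond NC NR) : Prop :=
  Qle 0 (clo k) /\ Qle (clo k) (cup k) /\ Qle (cup k) 1.

Definition sat (NC NR : Type) (T : finType) (I : interp NC NR T) (k : cond NC NR) : Prop :=
  card_ext I (cpre k) = 0%N \/
  Rle (Q2R (clo k)) (ratio I (ccon k) (cpre k)) /\ Rle (ratio I (ccon k) (cpre k)) (Q2R (cup k)).

(* A knowledge base given as a (finite) set of conditionals, represented by a
   membership predicate; a finite model has a nonempty finite domain. *)
Definition is_model (NC NR : Type) (P : cond NC NR -> Prop) (T : finType) (I : interp NC NR T) : Prop :=
  (0 < #|T|)%N /\ forall k, P k -> sat I k.

Definition KB_pred (NC NR : Type) (K : list (cond NC NR)) : cond NC NR -> Prop :=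
  fun k => In k K.

Definition consistent (NC NR : Type) (K : list (cond NC NR)) : Prop :=
  exists (T : finType) (I : interp NC NR T), is_model (KB_pred K) I.

Definition entails_l (NC NR : Type) (P : cond NC NR -> Prop) (k : cond NC NR) : Prop :=
  forall (T : finType) (I : interp NC NR T), is_model P I -> sat I k.

Definition is_glb (E : R -> Prop) (m : R) : Prop :=
  (forall x, E x -> (Rle m x)) /\ (forall b, (forall x, E x -> (Rle b x)) -> (Rle b m)).

Definition is_sup (E : R -> Prop) (M : R) : Prop :=
  (forall x, E x -> (Rle x M)) /\ (forall b, (forall x, E x -> (Rle x b)) -> (Rle M b)).

Definition ratios (NC NR : Type) (P : cond NC NR -> Prop) (C D : concept NC NR) : R -> Prop :=
  fun r => exists (T : finType) (I : interp NC NR T),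
      is_model P I /\ (0 < card_ext I D)%N /\ r = ratio I C D.

Definition entails_p (NC NR : Type) (P : cond NC NR -> Prop) (C D : concept NC NR) (m M : R) : Prop :=
  (exists (T : finType) (I : interp NC NR T), is_model P I /\ (0 < card_ext I D)%N) /\
  is_glb (ratios P C D) m /\ is_sup (ratios P C D) M.

Definition meets (NC NR : Type) (s1 s2 : list (NC + NR)) : Prop :=
  exists x, In x s1 /\ In x s2.

Definition csig (NC NR : Type) (k : cond NC NR) : list (NC + NR) :=
  Sig (ccon k) ++ Sig (cpre k).

(* conn K s k : k ⇌* q where q has signature s, via a chain of directly
   connected elements taken from K ∪ {q}. *)
Inductive conn (NC NR : Type) (K : list (cond NC NR)) (s : list (NC + NR)) : cond NC NR -> Prop :=
| conn_base : forall k, In k K -> meets (csig k) s -> conn K s k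
| conn_step : forall k k', In k K -> In k' K -> meets (csig k) (csig k') ->
                conn K s k' -> conn K s k.

Definition relevant (NC NR : Type) (K : list (cond NC NR)) (s : list (NC + NR)) : cond NC NR -> Prop :=
  fun k => In k K /\ conn K s k.

(* Main.v *)
Require Import Defs.
From Stdlib Require Import Reals QArith Qreals List.
From mathcomp Require Import all_boot.
From Stdlib Require Import ClassicalEpsilon Classical FunctionalExtensionality PropExtensionality.

Section Comb.
Variables (NC NR : Type) (inS : NC + NR -> Prop) (T1 T2 : finType)
  (I : interp NC NR T1) (J : interp NC NR T2).

Definition combI : interp NC NR (T1 * T2)%type :=
  {| cI := fun A p => if excluded_middle_informative (inS (inl A)) then cI I A p.1 else cI J A p.2;
     rI := fun r p q => if excluded_middle_informative (inS (inr r))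
                        then rI I r p.1 q.1 && (p.2 == q.2)
                        else rI J r p.2 q.2 && (p.1 == q.1) |}.

Lemma ext_l (X : concept NC NR) : (forall s, In s (Sig X) -> inS s) ->
  forall p, ext combI X p = ext I X p.1.
Proof.
elim: X => [|A|X IH|X IH Y IH2|r X IH] /= H p //.
- case: excluded_middle_informative => // h; exfalso; apply: h; apply: H; by left.
- by rewrite IH.
- rewrite IH ?IH2 // => s Hs; apply: H; apply: in_or_app; tauto.
- case: excluded_middle_informative => h; last by exfalso; apply: h; apply: H; by left.
  have IH' := IH (fun s Hs => H s (or_intror Hs)).
  apply/existsP/existsP => [[q /andP [/andP [Hr /eqP Hq] He]]|[y /andP [Hr He]]].
  + by exists q.1; rewrite Hr -IH'.
  + by exists (y, p.2); rewrite /= Hr eqxx IH'.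
Qed.

Lemma ext_r (X : concept NC NR) : (forall s, In s (Sig X) -> ~ inS s) ->
  forall p, ext combI X p = ext J X p.2.
Proof.
elim: X => [|A|X IH|X IH Y IH2|r X IH] /= H p //.
- case: excluded_middle_informative => // h; exfalso; apply: (H (inl A)) => //; by left.
- by rewrite IH.
- rewrite IH ?IH2 // => s Hs; apply: H; apply: in_or_app; tauto.
- case: excluded_middle_informative => h; first by exfalso; apply: (H (inr r)) => //; by left.
  have IH' := IH (fun s Hs => H s (or_intror Hs)).
  apply/existsP/existsP => [[q /andP [/andP [Hr /eqP Hq] He]]|[y /andP [Hr He]]].
  + by exists q.2; rewrite Hr -IH'.
  + by exists (p.1, y); rewrite /= Hr eqxx IH'.
Qed.

Lemma card_l (X : concept NC NR) : (forall s, In s (Sig X) -> inS s) ->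
  card_ext combI X = (card_ext I X * #|T2|)%N.
Proof.
move=> H; rewrite /card_ext.
have -> : [set x | ext combI X x] = setX [set x | ext I X x] [set: T2].
  by apply/setP => p; rewrite !inE ext_l // andbT.
by rewrite cardsX cardsT.
Qed.

Lemma card_r (X : concept NC NR) : (forall s, In s (Sig X) -> ~ inS s) ->
  card_ext combI X = (#|T1| * card_ext J X)%N.
Proof.
move=> H; rewrite /card_ext.
have -> : [set x | ext combI X x] = setX [set: T1] [set x | ext J X x].
  by apply/setP => p; rewrite !inE ext_r.
by rewrite cardsX cardsT.
Qed.

End Comb.
Local Open Scope R_scope.

Lemma ratio_scale a b n : (0 < b)%N -> (0 < n)%N ->
  Rdiv (INR (a * n)) (INR (b * n)) = Rdiv (INR a) (INR b).
Proof.
move=> Hb Hn; rewrite !mult_INR.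
have h1 : INR b <> 0 by apply: not_0_INR; move: Hb; case: b.
have h2 : INR n <> 0 by apply: not_0_INR; move: Hn; case: n.
by field.
Qed.

Lemma ratio_scale' a b n : (0 < b)%N -> (0 < n)%N ->
  Rdiv (INR (n * a)) (INR (n * b)) = Rdiv (INR a) (INR b).
Proof. by move=> Hb Hn; rewrite !(mulnC n); apply: ratio_scale. Qed.

Lemma sat_scale NC NR (T1 T2 : finType) (I1 : interp NC NR T1) (I2 : interp NC NR T2)
  (k : cond NC NR) n : (0 < n)%N ->
  card_ext I2 (CAnd (ccon k) (cpre k)) = (card_ext I1 (CAnd (ccon k) (cpre k)) * n)%N ->
  card_ext I2 (cpre k) = (card_ext I1 (cpre k) * n)%N ->
  (sat I2 k <-> sat I1 k) /\ ((0 < card_ext I2 (cpre k))%N -> ratio I2 (ccon k) (cpre k) = ratio I1 (ccon k) (cpre k)).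
Proof.
move=> Hn H1 H2.
have Hz : (card_ext I2 (cpre k) = 0%N) <-> (card_ext I1 (cpre k) = 0%N).
  by rewrite H2; split => [/eqP|->//]; rewrite muln_eq0 => /orP [/eqP//| /eqP hn]; by rewrite hn in Hn.
have Hr : (0 < card_ext I2 (cpre k))%N -> ratio I2 (ccon k) (cpre k) = ratio I1 (ccon k) (cpre k).
  move=> Hp; rewrite /ratio H1 H2 ratio_scale //; move: Hp; rewrite H2 muln_gt0 => /andP [//].
split => //; rewrite /sat.
case E : (card_ext I2 (cpre k)) => [|m].
- have E1 := proj1 Hz E; rewrite E1; tauto.
- have E1 : card_ext I1 (cpre k) <> 0%N by move=> h; move: (proj2 Hz h); rewrite E.
  rewrite -Hr ?E //; split => -[h|h]; by [right | ].
Qed.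

Lemma sat_scale' NC NR (T1 T2 : finType) (I1 : interp NC NR T1) (I2 : interp NC NR T2)
  (k : cond NC NR) n : (0 < n)%N ->
  card_ext I2 (CAnd (ccon k) (cpre k)) = (n * card_ext I1 (CAnd (ccon k) (cpre k)))%N ->
  card_ext I2 (cpre k) = (n * card_ext I1 (cpre k))%N ->
  (sat I2 k <-> sat I1 k) /\ ((0 < card_ext I2 (cpre k))%N -> ratio I2 (ccon k) (cpre k) = ratio I1 (ccon k) (cpre k)).
Proof. by move=> Hn H1 H2; apply: sat_scale Hn _ _; rewrite mulnC. Qed.

Lemma combine NC NR (K : list (cond NC NR)) (S : list (NC + NR))
  (T1 : finType) (I : interp NC NR T1) (T2 : finType) (J : interp NC NR T2) :
  is_model (relevant K S) I -> is_model (KB_pred K) J ->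
  let inS := fun s => In s S \/ exists k, relevant K S k /\ In s (csig k) in
  is_model (KB_pred K) (@combI NC NR inS T1 T2 I J) /\
  (forall X, (forall s, In s (Sig X) -> In s S) ->
     card_ext (@combI NC NR inS T1 T2 I J) X = (card_ext I X * #|T2|)%N) /\ (0 < #|T2|)%N.
Proof.
move=> [HT1 HI] [HT2 HJ] inS.
have Hsat : forall k, In k K -> sat (@combI NC NR inS T1 T2 I J) k.
  move=> k Hk; have [Hr|Hr] := classic (relevant K S k).
  - have Hs : forall s, In s (csig k) -> inS s by move=> s Hs; right; exists k.
    have [-> _] := @sat_scale NC NR T1 _ I (@combI NC NR inS T1 T2 I J) k _ HT2
      (@card_l NC NR inS T1 T2 I J (CAnd (ccon k) (cpre k)) Hs)
      (@card_l NC NR inS T1 T2 I J (cpre k) (fun s h => Hs s (in_or_app _ _ _ (or_intror h)))).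
    exact: HI.
  - have Hs : forall s, In s (csig k) -> ~ inS s.
      move=> s Hs [Hin|[k' [[Hk' Hc'] Hin]]]; apply: Hr; split => //.
      + by apply: conn_base => //; exists s.
      + by apply: (conn_step (k' := k')) => //; exists s.
    have [-> _] := @sat_scale' NC NR T2 _ J (@combI NC NR inS T1 T2 I J) k _ HT1
      (@card_r NC NR inS T1 T2 I J (CAnd (ccon k) (cpre k)) Hs)
      (@card_r NC NR inS T1 T2 I J (cpre k) (fun s h => Hs s (in_or_app _ _ _ (or_intror h)))).
    exact: HJ.
split; first by split => //; rewrite card_prod muln_gt0 HT1 HT2.
split => // X HX; apply: (@card_l NC NR inS T1 T2 I J X) => s Hs; left; exact: HX.
Qed.

Theorem proposition4 (NC NR : Type) (K : list (cond NC NR))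
  (wfK : forall k, In k K -> wf_cond k)
  (consK : consistent K) (C D : concept NC NR) :
  (forall l u : Q, Qle 0 l -> Qle l u -> Qle u 1 ->
     (entails_l (KB_pred K) (Cond C D l u) <->
      entails_l (relevant K (Sig C ++ Sig D)) (Cond C D l u))) /\
  (forall m M : R,
     (entails_p (KB_pred K) C D m M <->
      entails_p (relevant K (Sig C ++ Sig D)) C D m M)).
Proof.
set S := Sig C ++ Sig D.
have [T2 [J HJ]] := consK.
have sub : forall T (I : interp NC NR T), is_model (KB_pred K) I -> is_model (relevant K S) I.
  by move=> T I [h1 h2]; split => // k [hk _]; apply: h2.
have HSD : forall s, In s (Sig D) -> In s S by move=> s h; apply: in_or_app; right.
have HSCD : forall s, In s (Sig (CAnd C D)) -> In s S by [].
have transfer : forall T (I : interp NC NR T), is_model (relevant K S) I ->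
   exists T' (I' : interp NC NR T'), is_model (KB_pred K) I' /\
     (forall l u, sat I' (Cond C D l u) <-> sat I (Cond C D l u)) /\
     ((0 < card_ext I' D)%N <-> (0 < card_ext I D)%N) /\
     ((0 < card_ext I' D)%N -> ratio I' C D = ratio I C D).
  move=> T I HI.
  have [Hm [Hc Hn]] := @combine NC NR K S T I T2 J HI HJ.
  eexists; eexists; split; first exact: Hm.
  have h1 := Hc _ HSCD; have h2 := Hc _ HSD.
  split; first by move=> l u; have [-> _] := @sat_scale NC NR T _ I _ (Cond C D l u) _ Hn h1 h2.
  split; last by move=> hp; have [_ ->] := @sat_scale NC NR T _ I _ (Cond C D 0 0) _ Hn h1 h2.
  by rewrite h2 muln_gt0 Hn andbT.
split.
- move=> l u _ _ _; split => H T I HI.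
  + have [T' [I' [HI' [Hs _]]]] := transfer T I HI.
    by apply/Hs; apply: H.
  + by apply: H; apply: sub.
- have Hr : ratios (KB_pred K) C D = ratios (relevant K S) C D.
    apply: functional_extensionality => r; apply: propositional_extensionality.
    split => [[T [I [HI [Hp ->]]]]|[T [I [HI [Hp ->]]]]].
    + by exists T, I; split => //; apply: sub.
    + have [T' [I' [HI' [_ [Hp' Hr']]]]] := transfer T I HI.
      exists T', I'; split => //; split; first by apply/Hp'.
      by rewrite Hr' //; apply/Hp'.
  move=> m M; rewrite /entails_p Hr; split => -[[T [I [HI Hp]]] rest]; split => //.
  + by exists T, I; split => //; apply: sub.
  + have [T' [I' [HI' [_ [Hp' _]]]]] := transfer T I HI.
    by exists T', I'; split => //; apply/Hp'.
Qed.
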